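(* Let $\rho \in \mathcal{D}(\mathcal{H}_{B})$. If $\rho$ satisfies $\tr[\rho P_{DC}]=q$, then $\tr[\rho \Pi^N] \geq 1-\frac{q}{\lambda_{\mathrm{min}}^{N+1}}$, where $\Pi^N=\sum_{k=0}^N \tilde{\Pi}^k$. $N$ must be larger than 1 to obtain a nontrivial bound.
   Context: $\mathcal{H}_B$ is a two-polarization-mode Fock space. Bob's double-click POVM is $P_{DC} = p_{z} P_{H/V}+ (1-p_{z}) P_{D/A}$, where $P_{H/V} = \sum_{n_V=1}^\infty \sum_{n_H=1}^\infty |n_H,n_V\rangle\langle n_H,n_V|$ and $P_{D/A}$ is analogous in the diagonal basis, $p_z$ being the probability of choosing the $H/V$ basis. $\tilde{\Pi}^k = \sum_{n=0}^k |n,k-n\rangle\langle n,k-n|_{H/V}$ projects onto the total $k$-photon subspace, and $\lambda^{k}_{\min}$ denotes the smallest eigenvalue of $\tilde{\Pi}^k P_{DC}\tilde{\Pi}^k$, given by $\lambda^k_{\min}=\frac12-\frac12\sqrt{(2p_z-1)^2+8\cdot 2^{-k}(p_z-p_z^2)}$ for $k$ odd and $\frac12-\frac12\sqrt{(2p_z-1)^2+16\cdot 2^{-k}(p_z-p_z^2)}$ for $k$ even; this sequence is nondecreasing in $k$. *)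

(* Defs.v *)
From mathcomp Require Import all_boot all_order all_algebra.
From mathcomp Require Import complex.
From mathcomp Require Import all_classical all_reals all_analysis.
Import Order.TTheory GRing.Theory Num.Theory.
Import numFieldTopology.Exports numFieldNormedType.Exports.
Local Open Scope classical_set_scope.
Local Open Scope ring_scope.

Set Implicit Arguments.
Unset Strict Implicit.
Unset Printing Implicit Defensive.

(* Two-polarization-mode Fock space H_B with orthonormal Fock basis
   |n_H, n_V>, indexed by (n_H, n_V) : nat * nat.  An operator is given by
   its matrix elements  op x y = <x| A |y>  in this H/V Fock basis. *)
Definition fock := (nat * nat)%type.
Definition op (R : realType) := fock -> fock -> R[i].

Definition idop (R : realType) : op R := fun x y => if x == y then 1 else 0.

Definition kvec (k n : nat) : fock := (n, k - n)%N.

(* Block trace  tr[ Pi~^k rho Pi~^k X ]  =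
   sum_{i,j <= k} <i,k-i| rho |j,k-j> <j,k-j| X |i,k-i>.
   For an operator X commuting with total photon number (all the operators
   below), tr[rho X] = sum_k btr rho X k. *)
Definition btr (R : realType) (rho X : op R) (k : nat) : R[i] :=
  \sum_(i < k.+1) \sum_(j < k.+1) rho (kvec k i) (kvec k j) * X (kvec k j) (kvec k i).

(* Density operator on H_B: Hermitian, positive semidefinite (tested on all
   finitely supported vectors, i.e. vectors supported in a box [0,M)^2), and
   with trace (sum of the nonnegative diagonal entries) equal to 1.
   A positive semidefinite matrix with summable diagonal is exactly a positive
   trace-class operator. *)
Definition density (R : realType) (rho : op R) : Prop :=
  [/\ (forall x y, rho y x = (rho x y)^*%C),
      (forall (M : nat) (v : fock -> R[i]),
         0 <= \sum_(a < M) \sum_(b < M) \sum_(c < M) \sum_(d < M)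
                (v (nat_of_ord a, nat_of_ord b))^*%C
                * rho (nat_of_ord a, nat_of_ord b) (nat_of_ord c, nat_of_ord d)
                * v (nat_of_ord c, nat_of_ord d))
    & (fun n => \sum_(k < n) complex.Re (btr rho (@idop R) k)) @ \oo --> (1 : R)].

Definition PHV (R : realType) (x y : fock) : R :=
  if (x == y) && (0 < x.1)%N && (0 < x.2)%N then 1 else 0.

(* Diagonal basis: |D> = (|H>+|V>)/sqrt 2, |A> = (|H>-|V>)/sqrt 2, i.e.
   a_D^dag = (a_H^dag + a_V^dag)/sqrt 2, a_A^dag = (a_H^dag - a_V^dag)/sqrt 2.
   da_coef n m y = <y|_{H/V} |n,m>_{D/A}, where
   |n,m>_{D/A} = (a_D^dag)^n (a_A^dag)^m / sqrt(n! m!) |0>.  Expanding,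
   <p,q|n,m>_{D/A} = [p+q = n+m] sqrt(p! q! / (n! m! 2^(n+m)))
                      * sum_{i<=n, j<=m, i+j=p} C(n,i) C(m,j) (-1)^(m-j). *)
Definition da_coef (R : realType) (n m : nat) (y : fock) : R :=
  if (y.1 + y.2 == n + m)%N then
    Num.sqrt ((y.1)`! * (y.2)`!)%:R / Num.sqrt (n`! * m`! * 2 ^ (n + m))%:R
    * \sum_(i < n.+1) \sum_(j < m.+1)
        (if (i + j == y.1)%N then (-1) ^+ (m - j) * ('C(n, i) * 'C(m, j))%:R
         else 0)
  else 0.

(* P_{D/A} = sum_{n_D>=1, n_A>=1} |n_D,n_A><n_D,n_A|_{D/A}, written in the
   H/V basis (the D/A Fock states of total photon number k are those with
   n_D + n_A = k; only the block of total photon number x.1+x.2 contributes). *)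
Definition PDA (R : realType) (x y : fock) : R :=
  let k := (x.1 + x.2)%N in
  \sum_(n < k | (0 < n)%N) da_coef R n (k - n) x * da_coef R n (k - n) y.

Definition PDC (R : realType) (pz : R) : op R :=
  fun x y => (pz * PHV R x y + (1 - pz) * PDA R x y)%:C%C.

(* lambda^k_min: smallest eigenvalue of Pi~^k P_DC Pi~^k, as given in closed
   form in the paper. *)
Definition lambda_min (R : realType) (pz : R) (k : nat) : R :=
  1 / 2 - 1 / 2 * Num.sqrt ((2 * pz - 1) ^+ 2
     + (if odd k then 8 else 16) * (2 ^- k) * (pz - pz ^+ 2)).

Definition tr_PiN (R : realType) (rho : op R) (N : nat) : R :=
  complex.Re (\sum_(k < N.+1) btr rho (@idop R) k).

(* Main.v *)
Require Import Defs.
From mathcomp Require Import all_boot all_order all_algebra.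
From mathcomp Require Import complex.
From mathcomp Require Import all_classical all_reals all_analysis.
From mathcomp Require Import ring lra zify.
Import Order.TTheory GRing.Theory Num.Theory.
Import numFieldTopology.Exports numFieldNormedType.Exports.
Local Open Scope classical_set_scope.
Local Open Scope ring_scope.

Section P1.
Variable R : realType.

Definition Sc (k n p : nat) : R := \sum_(i < n.+1) \sum_(j < (k-n).+1)
   (if (i + j == p)%N then (-1) ^+ ((k-n) - j) * ('C(n, i) * 'C(k-n, j))%:R else 0).

Definition Pk (k n : nat) : {poly R} := ('X + 1) ^+ n * ('X - 1) ^+ (k - n).

Lemma coef_Pk k n p : (Pk k n)`_p = Sc k n p.
Proof.
rewrite /Pk /Sc exprD1n.
rewrite (addrC 'X) exprDn mulr_suml coef_sum.
apply: eq_bigr => i _; rewrite mulr_sumr coef_sum; apply: eq_bigr => j _.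
have -> : ('X ^+ i *+ 'C(n, i)) * ((-1) ^+ (k - n - j) * 'X ^+ j *+ 'C(k - n, j))
   = ((-1) ^+ (k - n - j) * ('C(n, i) * 'C(k - n, j))%:R)%:P * 'X ^+ (i + j) :> {poly R}.
  rewrite -[_ *+ 'C(n,i)]mulr_natr -[_ *+ 'C(k-n,j)]mulr_natr exprD natrM.
  rewrite !rmorphM /=.
  rewrite rmorphXn rmorphN1 /= !polyC_natr.
  ring.
rewrite coefCM coefXn eq_sym; case: eqP => _; rewrite ?mulr1 ?mulr0 //.
Qed.

Lemma size_Pk k n : (n <= k)%N -> (size (Pk k n) <= k.+1)%N.
Proof.
move=> nk; rewrite /Pk.
have -> : ('X + 1 : {poly R}) = 'X - (-1)%:P by rewrite rmorphN1 opprK.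
have -> : ('X - 1 : {poly R}) = 'X - 1%:P by [].
apply: leq_trans (size_polyMleq _ _) _.
rewrite !size_exp_XsubC /=; lia.
Qed.

Lemma horner_Pk k n x : (Pk k n).[x] = (x + 1) ^+ n * (x - 1) ^+ (k - n).
Proof. by rewrite /Pk !hornerE. Qed.

Lemma Pk_sum k n : (n <= k)%N ->
  \sum_(p < k.+1) Sc k n p *: Pk k p = 2 ^+ k *: 'X ^+ n.
Proof.
move=> nk; apply/eqP; rewrite -subr_eq0; apply/eqP.
set Q := _ - _.
pose rs := [seq (i.+2)%:R : R | i <- iota 0 (size Q)].
apply: (@roots_geq_poly_eq0 _ Q rs); last by rewrite size_map size_iota.
- apply/allP => _ /mapP [i _ ->]; rewrite /root /Q !hornerE horner_sum.
  set t : R := (i.+2)%:R.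
  have b0 : t - 1 != 0 by rewrite subr_eq0 /t pnatr_eq1.
  set x := (t + 1) / (t - 1).
  have E : forall p : 'I_k.+1, (Pk k p).[t] = (t - 1) ^+ k * x ^+ p.
    move=> p; rewrite horner_Pk /x expr_div_n.
    have hp : (p <= k)%N := ltnSE (ltn_ord p).
    rewrite -[X in (t - 1) ^+ X * _](subnKC hp) exprD; field.
    by rewrite expf_neq0.

  under eq_bigr do rewrite hornerZ E mulrCA.
  rewrite -mulr_sumr.
  under eq_bigr do rewrite -coef_Pk.
  rewrite -(horner_coef_wide x (size_Pk k n nk)) horner_Pk.
  rewrite -{1}(subnKC nk) exprD mulrACA -!exprMn.
  have -> : (t - 1) * (x + 1) = 2 * t by rewrite /x; field.
  have -> : (t - 1) * (x - 1) = 2 by rewrite /x; field.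
  by rewrite exprMn -mulrA mulrCA -exprD subnKC // mulrC subrr.

- rewrite map_inj_uniq ?iota_uniq // => a b /eqP; rewrite eqr_nat => /eqP [] //.

Qed.

Lemma Sc_T2 k n j : (n <= k)%N ->
  \sum_(p < k.+1) Sc k n p * Sc k p j = 2 ^+ k * (j == n)%:R.
Proof.
move=> nk; have := congr1 (fun P : {poly R} => P`_j) (Pk_sum k n nk).
rewrite /= coef_sum coefZ coefXn => <-.
by apply: eq_bigr => p _; rewrite coefZ coef_Pk.
Qed.

Definition asum (k n p i : nat) : R :=
  if (i <= p)%N then (-1) ^+ (k - n - (p - i)) * ('C(n, i) * 'C(k - n, p - i))%:R else 0.

Lemma Sc_single k n p : (n <= k)%N -> Sc k n p = \sum_(i < k.+1) asum k n p i.
Proof.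
move=> nk; rewrite /Sc.
have inner : forall i : nat, \sum_(j < (k - n).+1)
   (if (i + j == p)%N then (-1) ^+ ((k-n) - j) * ('C(n, i) * 'C(k-n, j))%:R else 0)
   = asum k n p i.
  move=> i; rewrite -big_mkcond /=.
  rewrite (eq_bigl (fun j : 'I_ _ => (i <= p)%N && (j == (p - i)%N :> nat))); last first.
    move=> j /=; apply/eqP/andP => [<-|[ip /eqP ->]]; first by split; [rewrite leq_addr | rewrite addKn].
    by rewrite subnKC.
  rewrite (big_ord1_cond_eq _ (fun j : nat => (-1) ^+ ((k-n) - j) * ('C(n, i) * 'C(k-n, j))%:R) (fun _ => (i <= p)%N)) /asum; case: (leqP i p) => ip; rewrite ?andbF ?andbT //.
  case: (ltnP (p - i) (k - n).+1) => // hb.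
  by rewrite (bin_small hb) muln0 mulr0.
rewrite (eq_bigr (fun i : 'I_n.+1 => asum k n p i)); last by move=> i _; exact: inner.
rewrite -(big_mkord xpredT (asum k n p)) -(big_mkord xpredT (asum k n p)).
rewrite [RHS](big_cat_nat (n := n.+1)) //= [X in _ = _ + X]big1_seq ?addr0 //.
move=> i /andP [_]; rewrite mem_index_iota => /andP [hi _].
by rewrite /asum bin_small // mul0n mulr0; case: ifP.
Qed.

Definition Df (k p : nat) : nat := (p`! * (k - p)`!)%N.

Lemma binfact_sym k n p i : (n <= k)%N -> (p <= k)%N -> (i <= n)%N -> (i <= p)%N ->
  ('C(n, i) * 'C(k - n, p - i) * Df k p = 'C(p, i) * 'C(k - p, n - i) * Df k n)%N.
Proof.
move=> nk pk iN iP; rewrite /Df.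
case: (leqP (p - i) (k - n)) => h.
  have h' : (n - i <= k - p)%N by lia.
  have er : (k - n - (p - i) = k - p - (n - i))%N by lia.
  rewrite -{1}(bin_fact iP) -{1}(bin_fact h') -{1}(bin_fact iN) -{1}(bin_fact h) er.
  ring.
have h' : (k - p < n - i)%N by lia.
by rewrite (bin_small h) (bin_small h') !muln0 !mul0n.
Qed.

Lemma asum_sym k n p i : (n <= k)%N -> (p <= k)%N ->
  (Df k p)%:R * asum k n p i = (Df k n)%:R * asum k p n i :> R.
Proof.
move=> nk pk; rewrite /asum.
case: (leqP i p) => iP; case: (leqP i n) => iN.
- case: (leqP (p - i) (k - n)) => h.
    have er : (k - n - (p - i) = k - p - (n - i))%N by lia.
    rewrite er mulrCA [RHS]mulrCA -!natrM.
    by rewrite (mulnC (Df k p)) (mulnC (Df k n)) binfact_sym.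
  have h' : (k - p < n - i)%N by lia.
  by rewrite (bin_small h) (bin_small h') !muln0 !mulr0.
- by rewrite (bin_small iN) mul0n mulr0n !mulr0.
- by rewrite (bin_small iP) mul0n mulr0n !mulr0.
- by rewrite !mulr0.
Qed.

Lemma Sc_sym k n p : (n <= k)%N -> (p <= k)%N ->
  (Df k p)%:R * Sc k n p = (Df k n)%:R * Sc k p n :> R.
Proof.
move=> nk pk; rewrite !Sc_single // !mulr_sumr.
by apply: eq_bigr => i _; rewrite asum_sym.
Qed.

Definition Mk (k p n : nat) : R := da_coef R n (k - n) (p, (k - p)%N).

Lemma Df_gt0 k p : (0 < Df k p)%N.
Proof. by rewrite /Df muln_gt0 !fact_gt0. Qed.

Definition sq (k p : nat) : R := Num.sqrt (Df k p)%:R.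
Definition s2 (k : nat) : R := Num.sqrt (2 ^ k)%:R.

Lemma sq_gt0 k p : 0 < sq k p.
Proof. by rewrite /sq sqrtr_gt0 ltr0n Df_gt0. Qed.
Lemma s2_gt0 k : 0 < s2 k.
Proof. by rewrite /s2 sqrtr_gt0 ltr0n expn_gt0. Qed.
Lemma sq_sqr k p : sq k p ^+ 2 = (Df k p)%:R.
Proof. by rewrite /sq sqr_sqrtr // ler0n. Qed.
Lemma s2_sqr k : s2 k ^+ 2 = 2 ^+ k.
Proof. by rewrite /s2 sqr_sqrtr ?ler0n // natrX. Qed.

Lemma MkE k p n : (n <= k)%N -> (p <= k)%N ->
  Mk k p n = sq k p / (sq k n * s2 k) * Sc k n p.
Proof.
move=> nk pk; rewrite /Mk /da_coef /= subnKC // subnKC // eqxx.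
rewrite /sq /s2 /Df -sqrtrM ?ler0n // -natrM.
by rewrite /Sc.
Qed.

Lemma Mk_sym k p n : (n <= k)%N -> (p <= k)%N -> Mk k p n = Mk k n p.
Proof.
move=> nk pk; rewrite !MkE //.
have hs := Sc_sym k n p nk pk.
have a0 := sq_gt0 k p; have b0 := sq_gt0 k n; have c0 := s2_gt0 k.
rewrite -!sq_sqr in hs.
apply: (@mulfI _ (sq k p * sq k n * s2 k)); first by rewrite !mulf_neq0 // gt_eqF.
rewrite [LHS](_ : _ = sq k p ^+ 2 * Sc k n p); last by field; rewrite !gt_eqF.
rewrite [RHS](_ : _ = sq k n ^+ 2 * Sc k p n); last by field; rewrite !gt_eqF.
exact: hs.
Qed.

Lemma Mk_compl k i j : (i <= k)%N -> (j <= k)%N ->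
  \sum_(n < k.+1) Mk k i n * Mk k j n = (i == j)%:R.
Proof.
move=> ik jk.
rewrite (eq_bigr (fun n : 'I_k.+1 => sq k i / (sq k j * s2 k ^+ 2) * (Sc k j n * Sc k n i))); last first.
  move=> n _; have nk : (n <= k)%N := ltnSE (ltn_ord n).
  rewrite (Mk_sym k j n) // !MkE //.
  have := sq_gt0 k n; have := sq_gt0 k j; have := s2_gt0 k => c0 b0 a0.
  by field; rewrite !gt_eqF.
rewrite -mulr_sumr Sc_T2 // s2_sqr.
have := sq_gt0 k j; have := s2_gt0 k => c0 b0.
case: eqP => [->|_]; last by rewrite !mulr0.
by field; rewrite !gt_eqF // expf_neq0.
Qed.

Lemma Mk_orth k n n' : (n <= k)%N -> (n' <= k)%N ->
  \sum_(p < k.+1) Mk k p n * Mk k p n' = (n == n')%:R.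
Proof.
move=> nk nk'; rewrite -(Mk_compl k n n') //; apply: eq_bigr => p _.
have pk : (p <= k)%N := ltnSE (ltn_ord p).
by rewrite (Mk_sym k p n) // (Mk_sym k p n') //.
Qed.

Lemma Sc_k_0 k : Sc k k 0 = 1.
Proof.
rewrite /Sc subnn big_ord_recl /= big_ord1 /= bin0 subnn expr0 mul1r.
by rewrite bin0 mul1n big1 ?addr0 // => i _; rewrite big1.
Qed.

Lemma Sc_k_k k : Sc k k k = 1.
Proof.
rewrite /Sc subnn big_ord_recr /= big_ord1 /= addn0 eqxx binn bin0 subnn expr0 mul1r.
rewrite big1 ?add0r // => i _; rewrite big_ord1 /= addn0.
by rewrite ltn_eqF.
Qed.

Lemma Sc_0_0 k : Sc k 0 0 = (-1) ^+ k.
Proof.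
by rewrite /Sc subn0 big_ord1 /= big_ord_recl /= big1 ?addr0 // subn0 !bin0 mulr1.
Qed.

Definition sk (k : nat) : R := (s2 k)^-1.

Lemma Mk_0k k : Mk k 0 k = sk k.
Proof.
rewrite MkE // Sc_k_0 mulr1 /sk /sq /Df subn0 subnn mulnC.
have := sq_gt0 k k; rewrite /sq /Df subnn mulnC => a0.
by rewrite invfM mulrA divff ?gt_eqF // mul1r.
Qed.

Lemma Mk_kk k : Mk k k k = sk k.
Proof.
rewrite MkE // Sc_k_k mulr1 /sk.
by rewrite invfM mulrA divff ?gt_eqF ?sq_gt0 // mul1r.
Qed.

Lemma Mk_00 k : Mk k 0 0 = (-1) ^+ k * sk k.
Proof.
rewrite MkE // Sc_0_0 /sk.
by rewrite invfM mulrA divff ?gt_eqF ?sq_gt0 // mul1r mulrC.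
Qed.

Lemma Mk_k0 k : Mk k k 0 = sk k.
Proof. by rewrite (Mk_sym k k 0) // Mk_0k. Qed.
End P1.

Section P2.
Variable R : realType.

Definition dot K (f g : 'I_K -> R) : R := \sum_(i < K) f i * g i.
Arguments dot {K}.

Lemma dotC {K} (f g : 'I_K -> R) : dot f g = dot g f.
Proof. by apply: eq_bigr => i _; rewrite mulrC. Qed.

Lemma bessel r K (F : 'I_r -> 'I_K -> R) (w : 'I_K -> R) :
  (forall j j', j != j' -> dot (F j) (F j') = 0) ->
  (forall j, 0 < dot (F j) (F j)) ->
  \sum_(j < r) (dot (F j) w) ^+ 2 / dot (F j) (F j) <= dot w w.
Proof.
move=> orth pos.
pose a j := dot (F j) w / dot (F j) (F j).
set T := \sum_(j < r) _.
have H0 : 0 <= \sum_(i < K) (w i - \sum_(j < r) a j * F j i) ^+ 2.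
  by apply: sumr_ge0 => i _; rewrite sqr_ge0.
have E1 : \sum_(i < K) w i * (\sum_(j < r) a j * F j i) = T.
  under eq_bigr do rewrite mulr_sumr.
  rewrite exchange_big /=; apply: eq_bigr => j _.
  rewrite /a (_ : \sum_(i < K) _ = dot (F j) w / dot (F j) (F j) * dot (F j) w).
    by rewrite mulrAC expr2.
  by rewrite /dot mulr_sumr; apply: eq_bigr => i _; ring.
have E2 : \sum_(i < K) (\sum_(j < r) a j * F j i) ^+ 2 = T.
  under eq_bigr do rewrite expr2 mulr_suml.
  rewrite exchange_big /=; apply: eq_bigr => j _.
  under eq_bigr do rewrite mulr_sumr.
  rewrite exchange_big /= (bigD1 j) //= [X in _ + X]big1 ?addr0.
    rewrite /a (_ : \sum_(i < K) _ = (dot (F j) w / dot (F j) (F j)) ^+ 2 * dot (F j) (F j)).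
      have := pos j => hp; field; exact: lt0r_neq0.
    by rewrite /dot mulr_sumr; apply: eq_bigr => i _; rewrite expr2; ring.
  move=> j' hj'; rewrite (_ : \sum_(i < K) _ = a j * a j' * dot (F j) (F j')).
    by rewrite orth ?mulr0 // eq_sym.
  by rewrite /dot mulr_sumr; apply: eq_bigr => i _; ring.
have E : \sum_(i < K) (w i - \sum_(j < r) a j * F j i) ^+ 2 = dot w w
     - 2 * (\sum_(i < K) w i * (\sum_(j < r) a j * F j i))
     + \sum_(i < K) (\sum_(j < r) a j * F j i) ^+ 2.
  rewrite /dot mulr_sumr -sumrB -big_split /=.
  by apply: eq_bigr => i _; ring.
rewrite E E1 E2 in H0; lra.
Qed.


Lemma scalar_ineq (p gam S mu a t : R) :
  0 < p < 1 -> gam ^+ 2 < 1 -> 0 <= S ->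
  (2 * p - 1) ^+ 2 + 4 * p * (1 - p) * gam ^+ 2 <= S ^+ 2 ->
  (2 * p - 1 + 2 * (1 - p) * gam ^+ 2) ^+ 2 < S ^+ 2 ->
  mu = (1 + S) / 2 ->
  0 <= mu * (a ^+ 2 * (1 - gam ^+ 2) + t ^+ 2) - p * a ^+ 2 * (1 - gam ^+ 2)
       - (1 - p) * (1 - gam ^+ 2) * (gam * a + t) ^+ 2.
Proof.
move=> /andP [p0 p1] g1 S0 hD hX ->.
set g := gam ^+ 2 in g1 hD hX *.
have g0 : 0 <= g by rewrite /g sqr_ge0.
set X := 2 * p - 1 + 2 * (1 - p) * g in hX.
have hSX : X < S.
  case: (lerP X 0) => hx; first nra.
  rewrite ltNge; apply/negP => hle.
  have : S ^+ 2 <= X ^+ 2 by rewrite ler_sqr // ?nnegrE; lra.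
  lra.
set m := (1 + S) / 2.
have hA : 0 < m - p - (1 - p) * g by rewrite /m /X in hSX *; lra.
have hm : 0 <= m ^+ 2 - m + p * (1 - p) * (1 - g).
  have -> : m ^+ 2 - m + p * (1 - p) * (1 - g)
     = (S ^+ 2 - ((2 * p - 1) ^+ 2 + 4 * p * (1 - p) * g)) / 4 by rewrite /m; field.
  by apply: divr_ge0; lra.
set A := (1 - g) * (m - p - (1 - p) * g).
set B := - 2 * (1 - p) * (1 - g) * gam.
set C := m - (1 - p) * (1 - g).
have hA' : 0 < A by rewrite /A; apply: mulr_gt0; lra.
have hdet : 4 * A * C - B ^+ 2 = 4 * (1 - g) * (m ^+ 2 - m + p * (1 - p) * (1 - g)).
  by rewrite /A /B /C /g; ring.
have hQ : m * (a ^+ 2 * (1 - g) + t ^+ 2) - p * a ^+ 2 * (1 - g)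
       - (1 - p) * (1 - g) * (gam * a + t) ^+ 2 = A * a ^+ 2 + B * a * t + C * t ^+ 2.
  by rewrite /A /B /C /g; ring.
rewrite hQ.
have h4 : 4 * A * (A * a ^+ 2 + B * a * t + C * t ^+ 2)
   = (2 * A * a + B * t) ^+ 2 + (4 * A * C - B ^+ 2) * t ^+ 2 by ring.
have hpos : 0 <= 4 * A * (A * a ^+ 2 + B * a * t + C * t ^+ 2).
  rewrite h4 hdet; apply: addr_ge0; first exact: sqr_ge0.
  apply: mulr_ge0; last exact: sqr_ge0.
  apply: mulr_ge0 => //; lra.
rewrite pmulr_rge0 // in hpos; lra.
Qed.

Lemma dotBl K (f g h : 'I_K -> R) (c : R) :
  dot (fun x => f x - c * g x) h = dot f h - c * dot g h.
Proof.
by rewrite /dot mulr_sumr -sumrB; apply: eq_bigr => i _; ring.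
Qed.

Lemma dotBr K (f g h : 'I_K -> R) (c : R) :
  dot h (fun x => f x - c * g x) = dot h f - c * dot h g.
Proof. by rewrite /dot mulr_sumr -sumrB; apply: eq_bigr => i _; ring. Qed.

Lemma scalar_div (p gam S a t : R) :
  0 < p < 1 -> gam ^+ 2 < 1 -> 0 <= S ->
  (2 * p - 1) ^+ 2 + 4 * p * (1 - p) * gam ^+ 2 <= S ^+ 2 ->
  (2 * p - 1 + 2 * (1 - p) * gam ^+ 2) ^+ 2 < S ^+ 2 ->
  p * a ^+ 2 + (1 - p) * (gam * a + t) ^+ 2 <=
    (1 + S) / 2 * (a ^+ 2 / 1 + t ^+ 2 / (1 - gam ^+ 2)).
Proof.
move=> hp hg hS h1 h2.
have := @scalar_ineq p gam S ((1 + S) / 2) a t hp hg hS h1 h2 (erefl _).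
have hs : 0 < 1 - gam ^+ 2 by lra.
set Q := _ - _ - _ => hQ.
have : 0 <= Q / (1 - gam ^+ 2) by apply: divr_ge0 => //; lra.
have -> : Q / (1 - gam ^+ 2) = (1 + S) / 2 * (a ^+ 2 / 1 + t ^+ 2 / (1 - gam ^+ 2))
    - (p * a ^+ 2 + (1 - p) * (gam * a + t) ^+ 2).
  by rewrite /Q; field; rewrite gt_eqF.
lra.
Qed.

Lemma quad_bound K (w u1 u2 g1 g2 : 'I_K -> R) (gam1 gam2 p S : R) :
  dot u1 u1 = 1 -> dot u2 u2 = 1 -> dot u1 u2 = 0 ->
  dot g1 g1 = 1 -> dot g2 g2 = 1 -> dot g1 g2 = 0 ->
  dot u1 g1 = gam1 -> dot u2 g2 = gam2 -> dot u1 g2 = 0 -> dot u2 g1 = 0 ->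
  0 < p < 1 -> 0 <= S ->
  gam1 ^+ 2 < 1 -> (2 * p - 1) ^+ 2 + 4 * p * (1 - p) * gam1 ^+ 2 <= S ^+ 2 ->
  (2 * p - 1 + 2 * (1 - p) * gam1 ^+ 2) ^+ 2 < S ^+ 2 ->
  gam2 ^+ 2 < 1 -> (2 * p - 1) ^+ 2 + 4 * p * (1 - p) * gam2 ^+ 2 <= S ^+ 2 ->
  (2 * p - 1 + 2 * (1 - p) * gam2 ^+ 2) ^+ 2 < S ^+ 2 ->
  p * ((dot u1 w) ^+ 2 + (dot u2 w) ^+ 2) + (1 - p) * ((dot g1 w) ^+ 2 + (dot g2 w) ^+ 2)
   <= (1 + S) / 2 * dot w w.
Proof.
move=> u11 u22 u12 g11 g22 g12 ug1 ug2 ug12 ug21 hp hS hg1 h11 h12 hg2 h21 h22.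
pose r1 := fun x => g1 x - gam1 * u1 x.
pose r2 := fun x => g2 x - gam2 * u2 x.
have g1u1 : dot g1 u1 = gam1 by rewrite dotC.
have g2u2 : dot g2 u2 = gam2 by rewrite dotC.
have g2u1 : dot g2 u1 = 0 by rewrite dotC.
have g1u2 : dot g1 u2 = 0 by rewrite dotC.
have u21 : dot u2 u1 = 0 by rewrite dotC.
have g21 : dot g2 g1 = 0 by rewrite dotC.
have r11 : dot r1 r1 = 1 - gam1 ^+ 2.
  rewrite /r1 dotBl !dotBr g11 u11 g1u1 ug1; ring.
have r22 : dot r2 r2 = 1 - gam2 ^+ 2.
  rewrite /r2 dotBl !dotBr g22 u22 g2u2 ug2; ring.
have r12 : dot r1 r2 = 0.
  rewrite /r1 /r2 dotBl !dotBr g12 g1u2 ug12 u12; ring.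
have r1u1 : dot r1 u1 = 0 by rewrite /r1 dotBl u11 g1u1; ring.
have r1u2 : dot r1 u2 = 0 by rewrite /r1 dotBl u12 g1u2; ring.
have r2u1 : dot r2 u1 = 0 by rewrite /r2 dotBl u21 g2u1; ring.
have r2u2 : dot r2 u2 = 0 by rewrite /r2 dotBl u22 g2u2; ring.
pose F := fun j : 'I_4 => match val j with 0 => u1 | 1 => u2 | 2 => r1 | _ => r2 end.
have hB := @bessel 4 K F w.
have orth : forall j j', j != j' -> dot (F j) (F j') = 0.
  move=> [[|[|[|[|j]]]] hj] [[|[|[|[|j']]]] hj'] //= _;
   rewrite ?u12 ?r1u1 ?r1u2 ?r2u1 ?r2u2 ?r12 // dotC ?u12 ?r1u1 ?r1u2 ?r2u1 ?r2u2 ?r12 //.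
have pos : forall j, 0 < dot (F j) (F j).
  move=> [[|[|[|[|j]]]] hj] //=; rewrite ?u11 ?u22 ?r11 ?r22 ?ltr01 //; lra.
have {hB} := hB orth pos.
rewrite !big_ord_recl big_ord0 addr0 /F /= u11 u22 r11 r22.
have e1 : dot g1 w = gam1 * dot u1 w + dot r1 w by rewrite /r1 dotBl; ring.
have e2 : dot g2 w = gam2 * dot u2 w + dot r2 w by rewrite /r2 dotBl; ring.
rewrite e1 e2.
have s1 := @scalar_div p gam1 S (dot u1 w) (dot r1 w) hp hg1 hS h11 h12.
have s2 := @scalar_div p gam2 S (dot u2 w) (dot r2 w) hp hg2 hS h21 h22.
move=> hB.
have hm : 0 <= (1 + S) / 2 by apply: divr_ge0; lra.
have := ler_wpM2l hm hB.
lra.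
Qed.

Lemma dot_scale K (x y : R) (f h : 'I_K -> R) :
  dot (fun i => x * f i) (fun i => y * h i) = x * y * dot f h.
Proof. by rewrite /dot mulr_sumr; apply: eq_bigr => i _; ring. Qed.

Lemma dot_scalel K (x : R) (f h : 'I_K -> R) :
  dot (fun i => x * f i) h = x * dot f h.
Proof. by rewrite /dot mulr_sumr; apply: eq_bigr => i _; ring. Qed.

Lemma quad_bound2 K (w u1 u2 g1 g2 : 'I_K -> R) (c1 c2 nu p S : R) :
  0 < nu ->
  dot u1 u1 = 2 -> dot u2 u2 = 2 -> dot u1 u2 = 0 ->
  dot g1 g1 = nu -> dot g2 g2 = nu -> dot g1 g2 = 0 ->
  dot u1 g1 = c1 -> dot u2 g2 = c2 -> dot u1 g2 = 0 -> dot u2 g1 = 0 ->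
  0 < p < 1 -> 0 <= S ->
  c1 ^+ 2 / (2 * nu) < 1 -> (2 * p - 1) ^+ 2 + 4 * p * (1 - p) * (c1 ^+ 2 / (2 * nu)) <= S ^+ 2 ->
  (2 * p - 1 + 2 * (1 - p) * (c1 ^+ 2 / (2 * nu))) ^+ 2 < S ^+ 2 ->
  c2 ^+ 2 / (2 * nu) < 1 -> (2 * p - 1) ^+ 2 + 4 * p * (1 - p) * (c2 ^+ 2 / (2 * nu)) <= S ^+ 2 ->
  (2 * p - 1 + 2 * (1 - p) * (c2 ^+ 2 / (2 * nu))) ^+ 2 < S ^+ 2 ->
  p * ((dot u1 w) ^+ 2 + (dot u2 w) ^+ 2) / 2 + (1 - p) * ((dot g1 w) ^+ 2 + (dot g2 w) ^+ 2) / nu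
   <= (1 + S) / 2 * dot w w.
Proof.
move=> nu0 u11 u22 u12 g11 g22 g12 ug1 ug2 ug12 ug21 hp hS hg1 h11 h12 hg2 h21 h22.
pose a := Num.sqrt (2^-1 : R); pose b := Num.sqrt (nu^-1).
have ha : a * a = 2^-1 by rewrite -expr2 sqr_sqrtr // invr_ge0; lra.
have hb : b * b = nu^-1 by rewrite -expr2 sqr_sqrtr // invr_ge0; lra.
have hg : forall c : R, (a * b * c) ^+ 2 = c ^+ 2 / (2 * nu).
  move=> c; rewrite (_ : (a * b * c) ^+ 2 = (a * a) * (b * b) * c ^+ 2); last by ring.
  rewrite ha hb; field; lra.
have := @quad_bound K w (fun i => a * u1 i) (fun i => a * u2 i) (fun i => b * g1 i)
   (fun i => b * g2 i) (a * b * c1) (a * b * c2) p S.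
rewrite !dot_scale !dot_scalel u11 u22 u12 g11 g22 g12 ug1 ug2 ug12 ug21 !hg ha hb.
have e1 : 2^-1 * 2 = 1 :> R by field.
have e2 : nu^-1 * nu = 1 by field; lra.
rewrite e1 e2 !mulr0 => /(_ erefl erefl erefl erefl erefl erefl erefl erefl erefl erefl hp hS
   hg1 h11 h12 hg2 h21 h22).
have ha2 : a ^+ 2 = 2^-1 by rewrite expr2.
have hb2 : b ^+ 2 = nu^-1 by rewrite expr2.
rewrite !exprMn ha2 hb2.
have -> : p * (dot u1 w ^+ 2 + dot u2 w ^+ 2) / 2 = p * (2^-1 * dot u1 w ^+ 2 + 2^-1 * dot u2 w ^+ 2).
  by field.
have -> : (1 - p) * (dot g1 w ^+ 2 + dot g2 w ^+ 2) / nu = (1 - p) * (nu^-1 * dot g1 w ^+ 2 + nu^-1 * dot g2 w ^+ 2).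
  by field; lra.
by [].
Qed.
End P2.

Lemma sum_mid_ord (R : realType) m (F : 'I_m.+1 -> R) : (0 < m)%N ->
  \sum_(a < m.+1) (if (0 < a)%N && (0 < m - a)%N then F a else 0)
  = \sum_(a < m.+1) F a - F ord0 - F ord_max.
Proof.
move=> m0.
have hmo : (ord_max : 'I_m.+1) != ord0 by rewrite -val_eqE /= gtn_eqF.
have E1 : \sum_(a < m.+1) F a = F ord0 + (F ord_max +
     \sum_(a < m.+1 | (a != ord0) && (a != ord_max)) F a).
  by rewrite (bigD1 ord0) //= (bigD1 ord_max).
have E2 : \sum_(a < m.+1) (if (0 < a)%N && (0 < m - a)%N then F a else 0)
     = \sum_(a < m.+1 | (a != ord0) && (a != ord_max)) F a.
  rewrite -big_mkcond /=; apply: eq_bigl => a; rewrite -!val_eqE /= lt0n subn_gt0.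
  by have := ltn_ord a; rewrite ltnS leq_eqVlt; case: ltngtP.
rewrite E1 E2; ring.
Qed.

Lemma sum_mid_nat (R : realType) m (F : nat -> R) : (0 < m)%N ->
  \sum_(n < m | (0 < n)%N) F n = \sum_(n < m.+1) F n - F 0%N - F m.
Proof.
case: m => // m _.
rewrite big_ord_recr /= big_mkcond big_ord_recl /= big_ord_recl /=.
have -> : \sum_(i < m) (if (0 < bump 0 i)%N then F (bump 0 i) else 0) = \sum_(i < m) F (bump 0 i).
  by apply: eq_bigr.
ring.
Qed.

Lemma strictX (R : realType) (p g S : R) : 0 < p < 1 -> 0 < g < 1 ->
  (2 * p - 1) ^+ 2 + 4 * p * (1 - p) * g <= S ^+ 2 ->
  (2 * p - 1 + 2 * (1 - p) * g) ^+ 2 < S ^+ 2.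
Proof.
move=> /andP [p0 p1] /andP [g0 g1] h.
have e : (2 * p - 1 + 2 * (1 - p) * g) ^+ 2 =
   (2 * p - 1) ^+ 2 + 4 * p * (1 - p) * g - 4 * ((1 - p) ^+ 2 * (g * (1 - g))) by ring.
have : 0 < (1 - p) ^+ 2 * (g * (1 - g)).
  apply: mulr_gt0; first by apply: exprn_gt0; lra.
  apply: mulr_gt0; lra.
lra.
Qed.

Section P3.
Variable R : realType.
Variable k : nat.
Local Notation K := k.+1.
Local Notation dotK := (dot R K).

Definition e0 : 'I_K -> R := fun a => (a == 0%N :> nat)%:R.
Definition ek : 'I_K -> R := fun a => (a == k :> nat)%:R.
Definition dk : 'I_K -> R := fun a => Mk R k a k.
Definition d0 : 'I_K -> R := fun a => Mk R k a 0.

Lemma dot_e0 f : dotK e0 f = f ord0.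
Proof.
rewrite /dot (bigD1 ord0) //= big1 ?addr0 ?mul1r // => i hi.
rewrite /e0; suff -> : (i == 0%N :> nat) = false by rewrite mul0r.
by apply/negbTE; apply: contra hi => /eqP h; apply/eqP/val_inj.
Qed.

Lemma dot_ek f : dotK ek f = f ord_max.
Proof.
rewrite /dot (bigD1 ord_max) //= /ek eqxx big1 ?addr0 ?mul1r // => i hi.
suff -> : (i == k :> nat) = false by rewrite mul0r.
by apply/negbTE; apply: contra hi => /eqP h; apply/eqP/val_inj.
Qed.

Lemma dot_lin (x1 x2 : R) f1 f2 h :
  dotK (fun a => x1 * f1 a + x2 * f2 a) h = x1 * dotK f1 h + x2 * dotK f2 h.
Proof.
by rewrite /dot !mulr_sumr -big_split; apply: eq_bigr => i _ /=; ring.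
Qed.

Lemma dot_linr (x1 x2 : R) f1 f2 h :
  dotK h (fun a => x1 * f1 a + x2 * f2 a) = x1 * dotK h f1 + x2 * dotK h f2.
Proof.
by rewrite /dot !mulr_sumr -big_split; apply: eq_bigr => i _ /=; ring.
Qed.


Definition Xk (pz : R) (a b : 'I_K) : R :=
  pz * PHV R (kvec k a) (kvec k b) + (1 - pz) * PDA R (kvec k a) (kvec k b).
Definition qf (Y : 'I_K -> 'I_K -> R) (w : 'I_K -> R) : R :=
  \sum_(a < K) \sum_(b < K) w a * Y a b * w b.

Lemma PHV_k (a b : 'I_K) : PHV R (kvec k a) (kvec k b) =
  if (a == b) && (0 < a)%N && (0 < k - a)%N then 1 else 0.
Proof.
rewrite /PHV /kvec /= xpair_eqE.
case: (eqVneq a b) => [->|hab]; first by rewrite !eqxx.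
have -> : (a == b :> nat) = false.
  by apply/negbTE; apply: contra hab => /eqP h; apply/eqP/val_inj.
by [].
Qed.

Lemma PDA_k (a b : 'I_K) : PDA R (kvec k a) (kvec k b) =
  \sum_(n < k | (0 < n)%N) Mk R k a n * Mk R k b n.
Proof.
rewrite /PDA /kvec /= subnKC //; exact: ltnSE (ltn_ord a).
Qed.

Lemma qf_lin (x y : R) (P Q : 'I_K -> 'I_K -> R) w :
  qf (fun a b => x * P a b + y * Q a b) w = x * qf P w + y * qf Q w.
Proof.
rewrite /qf !mulr_sumr -big_split; apply: eq_bigr => a _ /=.
rewrite !mulr_sumr -big_split; apply: eq_bigr => b _ /=; ring.
Qed.

Lemma qf_PHV w : qf (fun a b => PHV R (kvec k a) (kvec k b)) w =
  \sum_(a < K) (if (0 < a)%N && (0 < k - a)%N then w a ^+ 2 else 0).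
Proof.
apply: eq_bigr => a _; rewrite (bigD1 a) //= big1 ?addr0.
  by rewrite PHV_k eqxx /=; case: ifP => _; rewrite ?mulr1 ?mulr0 ?mul0r ?expr2.
by move=> b hb; rewrite PHV_k eq_sym (negbTE hb) /= mulr0 mul0r.
Qed.

Lemma qf_PDA w : qf (fun a b => PDA R (kvec k a) (kvec k b)) w =
  \sum_(n < k | (0 < n)%N) (dotK (fun a => Mk R k a n) w) ^+ 2.
Proof.
rewrite /qf.
under eq_bigr do under eq_bigr do rewrite PDA_k mulr_sumr mulr_suml.
under eq_bigr do rewrite exchange_big /=.
rewrite exchange_big /=; apply: eq_bigr => n _.
rewrite expr2 /dot mulr_suml; apply: eq_bigr => a _.
rewrite mulr_sumr; apply: eq_bigr => b _; ring.
Qed.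

Lemma qf_Xk pz w : qf (Xk pz) w =
  pz * \sum_(a < K) (if (0 < a)%N && (0 < k - a)%N then w a ^+ 2 else 0)
  + (1 - pz) * \sum_(n < k | (0 < n)%N) (dotK (fun a => Mk R k a n) w) ^+ 2.
Proof. by rewrite /Xk qf_lin qf_PHV qf_PDA. Qed.

Lemma qf_Xk_ge0 pz w : 0 <= pz <= 1 -> 0 <= qf (Xk pz) w.
Proof.
move=> /andP [p0 p1]; rewrite qf_Xk; apply: addr_ge0; apply: mulr_ge0.
- done.
- by apply: sumr_ge0 => a _; case: ifP => _; rewrite ?sqr_ge0.
- by rewrite subr_ge0.
- by apply: sumr_ge0 => n _; rewrite sqr_ge0.
Qed.

Hypothesis k0 : (0 < k)%N.

Lemma e0e0 : dotK e0 e0 = 1. Proof. by rewrite dot_e0 /e0 eqxx. Qed.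
Lemma ekek : dotK ek ek = 1. Proof. by rewrite dot_ek /ek /= eqxx. Qed.
Lemma e0ek : dotK e0 ek = 0. Proof. by rewrite dot_e0 /ek /= eq_sym (gtn_eqF k0). Qed.
Lemma eke0 : dotK ek e0 = 0. Proof. by rewrite dotC e0ek. Qed.
Lemma e0dk : dotK e0 dk = sk R k. Proof. by rewrite dot_e0 /dk /= Mk_0k. Qed.
Lemma ekdk : dotK ek dk = sk R k. Proof. by rewrite dot_ek /dk /= Mk_kk. Qed.
Lemma e0d0 : dotK e0 d0 = (-1) ^+ k * sk R k. Proof. by rewrite dot_e0 /d0 /= Mk_00. Qed.
Lemma ekd0 : dotK ek d0 = sk R k. Proof. by rewrite dot_ek /d0 /= Mk_k0. Qed.
Lemma dkdk : dotK dk dk = 1. Proof. by rewrite /dot /dk Mk_orth // eqxx. Qed.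
Lemma d0d0 : dotK d0 d0 = 1. Proof. by rewrite /dot /d0 Mk_orth // eqxx. Qed.
Lemma dkd0 : dotK dk d0 = 0. Proof. by rewrite /dot /dk /d0 Mk_orth // gtn_eqF. Qed.
Lemma d0dk : dotK d0 dk = 0. Proof. by rewrite dotC dkd0. Qed.


Lemma compl_w w : \sum_(n < K) (dotK (fun a => Mk R k a n) w) ^+ 2 = dotK w w.
Proof.
have E : forall n : 'I_K, (dotK (fun a => Mk R k a n) w) ^+ 2 =
   \sum_(a < K) \sum_(b < K) w a * w b * (Mk R k a n * Mk R k b n).
  move=> n; rewrite expr2 /dot mulr_suml; apply: eq_bigr => a _.
  rewrite mulr_sumr; apply: eq_bigr => b _; ring.
under eq_bigr do rewrite E.
rewrite exchange_big /=; apply: eq_bigr => a _.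
rewrite exchange_big /=.
under eq_bigr => b _ do rewrite -mulr_sumr (Mk_compl R k a b (ltnSE (ltn_ord a)) (ltnSE (ltn_ord b))).
rewrite (bigD1 a) //= eqxx mulr1 big1 ?addr0 //.
move=> b hb; suff -> : (a == b :> nat) = false by rewrite mulr0.
by apply/negbTE; apply: contra hb => /eqP h; apply/eqP/val_inj.
Qed.

Lemma two_k_bound : (2 < k)%N -> (2 ^+ k)^-1 <= 8^-1 :> R.
Proof.
move=> k3; rewrite lef_pV2 ?posrE ?exprn_gt0 //.
have : (2 ^ 3 <= 2 ^ k)%N by rewrite leq_pexp2l.
by rewrite -(ler_nat R) !natrX.
Qed.

Lemma sk_sqr : sk R k ^+ 2 = (2 ^+ k)^-1.
Proof. by rewrite /sk exprVn s2_sqr. Qed.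

Lemma qf_Xk_bound pz S w : (2 < k)%N -> 0 < pz < 1 -> 0 <= S ->
  (2 * pz - 1) ^+ 2 + (if odd k then 8 else 16) * (2 ^- k) * (pz - pz ^+ 2) <= S ^+ 2 ->
  (2 * pz - 1) ^+ 2 < S ^+ 2 ->
  (1 - (1 + S) / 2) * dotK w w <= qf (Xk pz) w.
Proof.
move=> k3 hp hS hD hX.
have ht := two_k_bound k3.
have ht0 : 0 < (2 ^+ k)^-1 :> R by rewrite invr_gt0 exprn_gt0.
have hs := sk_sqr.
rewrite qf_Xk (sum_mid_ord R k (fun a => w a ^+ 2) k0) (sum_mid_nat R k (fun n => (dotK (fun a => Mk R k a n) w) ^+ 2) k0).
rewrite compl_w.
have -> : \sum_(a < K) w a ^+ 2 = dotK w w by apply: eq_bigr => a _; rewrite expr2.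
rewrite -/(d0) -/(dk) -(dot_e0 w) -(dot_ek w).
set W := dotK w w.
suff : pz * ((dotK e0 w) ^+ 2 + (dotK ek w) ^+ 2) + (1 - pz) * ((dotK d0 w) ^+ 2 + (dotK dk w) ^+ 2)
   <= (1 + S) / 2 * W by lra.
pose u1 := fun a => 1 * e0 a + 1 * ek a.
pose u2 := fun a => 1 * e0 a + (-1) * ek a.
have u11 : dotK u1 u1 = 2 by rewrite /u1 dot_lin !dot_linr e0e0 e0ek eke0 ekek; ring.
have u22 : dotK u2 u2 = 2 by rewrite /u2 dot_lin !dot_linr e0e0 e0ek eke0 ekek; ring.
have u12 : dotK u1 u2 = 0 by rewrite /u1 /u2 dot_lin !dot_linr e0e0 e0ek eke0 ekek; ring.
have u1w : dotK u1 w = dotK e0 w + dotK ek w by rewrite /u1 dot_lin; ring.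
have u2w : dotK u2 w = dotK e0 w - dotK ek w by rewrite /u2 dot_lin; ring.
set s := sk R k in hs.
case: (boolP (odd k)) => hk; [rewrite hk in hD | rewrite (negbTE hk) in hD].
- have hsgn : (-1) ^+ k = -1 :> R by rewrite -signr_odd hk expr1.
  have ug1 : dotK u1 dk = 2 * s by rewrite /u1 dot_lin e0dk ekdk -/s; ring.
  have ug2 : dotK u2 d0 = - 2 * s by rewrite /u2 dot_lin e0d0 ekd0 hsgn -/s; ring.
  have ug12 : dotK u1 d0 = 0 by rewrite /u1 dot_lin e0d0 ekd0 hsgn -/s; ring.
  have ug21 : dotK u2 dk = 0 by rewrite /u2 dot_lin e0dk ekdk -/s; ring.
  have c1 : (2 * s) ^+ 2 / (2 * 1) = 2 * (2 ^+ k)^-1 by rewrite -hs; field.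
  have c2 : (- 2 * s) ^+ 2 / (2 * 1) = 2 * (2 ^+ k)^-1 by rewrite -hs; field.
  have hg1 : 2 * (2 ^+ k)^-1 < 1 :> R by lra.
  have hd1 : (2 * pz - 1) ^+ 2 + 4 * pz * (1 - pz) * (2 * (2 ^+ k)^-1) <= S ^+ 2.
    by rewrite (_ : 4 * pz * (1 - pz) * (2 * (2 ^+ k)^-1) = 8 / 2 ^+ k * (pz - pz ^+ 2)) //; ring.
  have hr : (0 < 2 * (2 ^+ k)^-1 :> R) && (2 * (2 ^+ k)^-1 < 1 :> R).
    by rewrite hg1 andbT; lra.
  have hx1 := strictX R pz (2 * (2 ^+ k)^-1) S hp hr hd1.
  have := @quad_bound2 R K w u1 u2 dk d0 (2 * s) (- 2 * s) 1 pz S ltr01 u11 u22 u12 dkdk d0d0 dkd0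
    ug1 ug2 ug12 ug21 hp hS.
  rewrite c1 c2 => /(_ hg1 hd1 hx1 hg1 hd1 hx1).
  rewrite u1w u2w /W => h; lra.
- have hsgn : (-1) ^+ k = 1 :> R by rewrite -signr_odd (negbTE hk) expr0.
  pose g1 := fun a => 1 * dk a + 1 * d0 a.
  pose g2 := fun a => 1 * dk a + (-1) * d0 a.
  have g11 : dotK g1 g1 = 2 by rewrite /g1 dot_lin !dot_linr dkdk d0d0 dkd0 d0dk; ring.
  have g22 : dotK g2 g2 = 2 by rewrite /g2 dot_lin !dot_linr dkdk d0d0 dkd0 d0dk; ring.
  have g12 : dotK g1 g2 = 0 by rewrite /g1 /g2 dot_lin !dot_linr dkdk d0d0 dkd0 d0dk; ring.
  have ug1 : dotK u1 g1 = 4 * s by rewrite /u1 /g1 dot_lin !dot_linr e0dk e0d0 ekdk ekd0 hsgn -/s; ring.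
  have ug2 : dotK u2 g2 = 0 by rewrite /u2 /g2 dot_lin !dot_linr e0dk e0d0 ekdk ekd0 hsgn -/s; ring.
  have ug12 : dotK u1 g2 = 0 by rewrite /u1 /g2 dot_lin !dot_linr e0dk e0d0 ekdk ekd0 hsgn -/s; ring.
  have ug21 : dotK u2 g1 = 0 by rewrite /u2 /g1 dot_lin !dot_linr e0dk e0d0 ekdk ekd0 hsgn -/s; ring.
  have g1w : dotK g1 w = dotK dk w + dotK d0 w by rewrite /g1 dot_lin; ring.
  have g2w : dotK g2 w = dotK dk w - dotK d0 w by rewrite /g2 dot_lin; ring.
  have c1 : (4 * s) ^+ 2 / (2 * 2) = 4 * (2 ^+ k)^-1 by rewrite -hs; field.
  have c2 : (0 : R) ^+ 2 / (2 * 2) = 0 by rewrite expr0n mul0r.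
  have hg1 : 4 * (2 ^+ k)^-1 < 1 :> R by lra.
  have hd1 : (2 * pz - 1) ^+ 2 + 4 * pz * (1 - pz) * (4 * (2 ^+ k)^-1) <= S ^+ 2.
    by rewrite (_ : 4 * pz * (1 - pz) * (4 * (2 ^+ k)^-1) = 16 / 2 ^+ k * (pz - pz ^+ 2)) //; ring.
  have hr : (0 < 4 * (2 ^+ k)^-1 :> R) && (4 * (2 ^+ k)^-1 < 1 :> R).
    by rewrite hg1 andbT; lra.
  have hx1 := strictX R pz (4 * (2 ^+ k)^-1) S hp hr hd1.
  have hg2 : (0 : R) < 1 by [].
  have hd2 : (2 * pz - 1) ^+ 2 + 4 * pz * (1 - pz) * 0 <= S ^+ 2 by rewrite mulr0 addr0; lra.
  have hx2 : (2 * pz - 1 + 2 * (1 - pz) * 0) ^+ 2 < S ^+ 2 by rewrite mulr0 addr0.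
  have := @quad_bound2 R K w u1 u2 g1 g2 (4 * s) 0 2 pz S (ltr0Sn R 1) u11 u22 u12 g11 g22 g12
    ug1 ug2 ug12 ug21 hp hS.
  rewrite c1 c2 => /(_ hg1 hd1 hx1 hg2 hd2 hx2).
  rewrite u1w u2w g1w g2w /W => h; lra.
Qed.


End P3.

Section P4.
Variable R : realType.
Local Notation C := (R[i]).

Lemma conjcE (x : C) : x^*%C = Num.conj x.
Proof. by case: x. Qed.

Lemma Re_add (x y : C) : complex.Re (x + y) = complex.Re x + complex.Re y.
Proof. by case: x; case: y. Qed.

Lemma Re_sum I (r : seq I) (P : pred I) (F : I -> C) :
  complex.Re (\sum_(i <- r | P i) F i) = \sum_(i <- r | P i) complex.Re (F i).
Proof. by apply: (big_morph _ Re_add). Qed.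

Lemma Re_conjmul (z w : C) (c : R) :
  complex.Re (Num.conj z * w * c%:C%C) = c * (complex.Re z * complex.Re w + complex.Im z * complex.Im w).
Proof. by case: z => a b; case: w => x y; rewrite -conjcE /=; ring. Qed.

Lemma Re_mulR (d z : C) : 0 <= d -> complex.Re (d * z) = complex.Re d * complex.Re z.
Proof.
rewrite lecE => /andP [/eqP hI _]; case: d hI => a b /= hb; case: z => x y /=.
by rewrite hb; ring.
Qed.

Lemma ge0_Re (d : C) : 0 <= d -> 0 <= complex.Re d.
Proof. by rewrite lecE => /andP [_ ->]. Qed.


Lemma trace_psd K (A : 'I_K -> 'I_K -> C) (Y : 'I_K -> 'I_K -> R) :
  (forall i j, A j i = (A i j)^*%C) ->
  (forall v : 'I_K -> C, 0 <= \sum_(a < K) \sum_(b < K) (v a)^*%C * A a b * v b) ->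
  (forall i j, Y i j = Y j i) ->
  (forall x : 'I_K -> R, 0 <= \sum_(a < K) \sum_(b < K) x a * Y a b * x b) ->
  0 <= complex.Re (\sum_(i < K) \sum_(j < K) A i j * (Y j i)%:C%C).
Proof.
move=> herm psd Ysym Ypsd.
pose Am : 'M[C]_K := \matrix_(i, j) A i j.
pose cT (M : 'M[C]_K) := map_mx Num.conj (trmx M).
have hAm : cT Am = Am.
  by apply/matrixP => i j; rewrite !mxE herm conjcE conjCK.
have nAm : Am \is normalmx.
  apply/normalmxP; have -> : map_mx Num.conj (trmx Am) = Am by exact: hAm. by [].
have AE := orthomx_spectralP nAm.
set P := spectralmx Am in AE; set D := spectral_diag Am in AE.
have PU : P \is unitarymx by apply: spectral_unitarymx.
have PPt : P *m cT P = 1%:M by apply/unitarymxP.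
rewrite invmx_unitary // in AE.
have Aij : forall i j, A i j = \sum_(r < K) Num.conj (P r i) * D 0 r * P r j.
  move=> i j; have := congr1 (fun M : 'M[C]_K => M i j) AE.
  rewrite /= mxE => ->; rewrite mxE; apply: eq_bigr => r _.
  by rewrite mul_mx_diag !mxE.
have Dr : forall r, D 0 r = \sum_(a < K) \sum_(b < K) (Num.conj (P r a))^*%C * A a b * Num.conj (P r b).
  move=> r.
  have : P *m Am *m cT P = diag_mx D.
    rewrite AE !mulmxA PPt mul1mx -mulmxA PPt mulmx1 //.
  move/(congr1 (fun M : 'M[C]_K => M r r)).
  have -> : (diag_mx D) r r = D 0 r by rewrite mxE eqxx mulr1n.
  move=> <-.
  rewrite mxE [RHS]exchange_big /=; apply: eq_bigr => b _; rewrite mxE mulr_suml; apply: eq_bigr => a _.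
  by rewrite !mxE conjcE conjCK.
have D0 : forall r, 0 <= D 0 r by move=> r; rewrite Dr; apply: psd.
have E : \sum_(i < K) \sum_(j < K) A i j * (Y j i)%:C%C =
   \sum_(r < K) D 0 r * (\sum_(i < K) \sum_(j < K) Num.conj (P r i) * P r j * (Y j i)%:C%C).
  under eq_bigr do under eq_bigr do rewrite Aij mulr_suml.
  under eq_bigr do rewrite exchange_big /=.
  rewrite exchange_big /=; apply: eq_bigr => r _.
  rewrite mulr_sumr; apply: eq_bigr => i _; rewrite mulr_sumr; apply: eq_bigr => j _; ring.
rewrite E Re_sum; apply: sumr_ge0 => r _.
rewrite Re_mulR //; apply: mulr_ge0; first exact: ge0_Re.
rewrite Re_sum.
under eq_bigr do rewrite Re_sum.
under eq_bigr do under eq_bigr do rewrite Re_conjmul.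
pose x := fun i => complex.Re (P r i); pose y := fun i => complex.Im (P r i).
have -> : \sum_(i < K) \sum_(j < K) Y j i * (complex.Re (P r i) * complex.Re (P r j)
      + complex.Im (P r i) * complex.Im (P r j))
   = \sum_(a < K) \sum_(b < K) x a * Y a b * x b + \sum_(a < K) \sum_(b < K) y a * Y a b * y b.
  rewrite -big_split; apply: eq_bigr => a _ /=; rewrite -big_split; apply: eq_bigr => b _ /=.
  by rewrite /x /y Ysym; ring.
by apply: addr_ge0.
Qed.
End P4.
Section P5.
Variable R : realType.
Local Notation C := (R[i]).

Lemma sum_pick (k a : nat) (f : nat -> C) : (a <= k)%N ->
  \sum_(b < k.+1) (if (a + b == k)%N then f b else 0) = f (k - a)%N.
Proof.
move=> ak; rewrite -big_mkcond /=.
rewrite (eq_bigl (fun b : 'I_k.+1 => (b == (k - a)%N :> nat))); last first.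
  move=> b /=; apply/eqP/eqP => h; lia.
rewrite (big_ord1_eq _ f (k - a)%N k.+1).
by rewrite ltnS leq_subr.
Qed.

Lemma psd_block (rho : op R) k : density rho ->
  forall v : 'I_k.+1 -> C,
  0 <= \sum_(a < k.+1) \sum_(b < k.+1) (v a)^*%C * rho (kvec k a) (kvec k b) * v b.
Proof.
case=> _ psd _ v.
pose V : fock -> C := fun x => if (x.1 + x.2 == k)%N then v (inord x.1) else 0.
have := psd k.+1 V.
suff -> : \sum_(a < k.+1) \sum_(b < k.+1) \sum_(c < k.+1) \sum_(d < k.+1)
   (V (nat_of_ord a, nat_of_ord b))^*%C * rho (nat_of_ord a, nat_of_ord b) (nat_of_ord c, nat_of_ord d)
    * V (nat_of_ord c, nat_of_ord d)
   = \sum_(a < k.+1) \sum_(b < k.+1) (v a)^*%C * rho (kvec k a) (kvec k b) * v b by [].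
apply: eq_bigr => a _.
have E : forall b : 'I_k.+1, \sum_(c < k.+1) \sum_(d < k.+1)
   (V (nat_of_ord a, nat_of_ord b))^*%C * rho (nat_of_ord a, nat_of_ord b) (nat_of_ord c, nat_of_ord d)
    * V (nat_of_ord c, nat_of_ord d)
   = if (a + b == k)%N then \sum_(c < k.+1) (v a)^*%C * rho (nat_of_ord a, nat_of_ord b) (kvec k c) * v c
     else 0.
  move=> b; rewrite /V /=.
  case: eqP => hab; last first.
    by apply: big1 => c _; apply: big1 => d _; rewrite conjc0 !mul0r.
  apply: eq_bigr => c _.
  rewrite (eq_bigr (fun d : 'I_k.+1 => if (c + d == k)%N then
       (v (inord a))^*%C * rho (nat_of_ord a, nat_of_ord b) (nat_of_ord c, nat_of_ord d) * v (inord c) else 0)).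
    rewrite (sum_pick k c (fun d => (v (inord a))^*%C * rho (nat_of_ord a, nat_of_ord b) (nat_of_ord c, d) * v (inord c))).
      by rewrite !inord_val.
    exact: ltnSE (ltn_ord c).
  by move=> d _; case: ifP => _; rewrite ?mulr0.
rewrite (eq_bigr _ (fun b _ => E b)).
rewrite (sum_pick k a (fun b => \sum_(c < k.+1) (v a)^*%C * rho (nat_of_ord a, b) (kvec k c) * v c)) //.
exact: ltnSE (ltn_ord a).
Qed.


Lemma kvec_eq k (i j : 'I_k.+1) : (kvec k i == kvec k j) = (i == j).
Proof.
rewrite /kvec xpair_eqE; case: (eqVneq i j) => [->|h]; first by rewrite !eqxx.
have -> : (i == j :> nat) = false.
  by apply/negbTE; apply: contra h => /eqP e; apply/eqP/val_inj.
by [].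
Qed.

Lemma Xk_sym k pz (a b : 'I_k.+1) : Xk R k pz a b = Xk R k pz b a.
Proof.
rewrite /Xk !PHV_k !PDA_k eq_sym.
case: (eqVneq b a) => [->|] //= _; congr (_ + _ * _).
by apply: eq_bigr => n _; rewrite mulrC.
Qed.

Lemma Re_lin (x y : C) (c : R) : complex.Re (x - c%:C%C * y) = complex.Re x - c * complex.Re y.
Proof. by case: x => a b; case: y => u v /=; ring. Qed.

Lemma block_ge (rho : op R) (pz c : R) k : density rho ->
  (forall w, c * dot R k.+1 w w <= qf R k (Xk R k pz) w) ->
  c * complex.Re (btr rho (@idop R) k) <= complex.Re (btr rho (PDC pz) k).
Proof.
move=> hd hw; have [herm _ _] := hd.
have := @trace_psd R k.+1 (fun i j => rho (kvec k i) (kvec k j))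
   (fun a b => Xk R k pz a b - c * (a == b)%:R) (fun i j => herm _ _) (psd_block rho k hd).
have E : \sum_(i < k.+1) \sum_(j < k.+1) rho (kvec k i) (kvec k j) *
     (Xk R k pz j i - c * (j == i)%:R)%:C%C
   = btr rho (PDC pz) k - c%:C%C * btr rho (@idop R) k.
  rewrite /btr mulr_sumr -sumrB; apply: eq_bigr => i _.
  rewrite mulr_sumr -sumrB; apply: eq_bigr => j _.
  rewrite /PDC /idop kvec_eq -/(Xk R k pz j i).
  case: (rho _ _) => u v; case: eqP => _ /=; apply/eqP; rewrite eq_complex /=; apply/andP; split; apply/eqP; ring.
rewrite E Re_lin subr_ge0; apply.
- by move=> i j; rewrite Xk_sym eq_sym.
- move=> x.
  have -> : \sum_(a < k.+1) \sum_(b < k.+1) x a * (Xk R k pz a b - c * (a == b)%:R) * x b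
     = qf R k (Xk R k pz) x - c * dot R k.+1 x x.
    rewrite /qf /dot mulr_sumr -sumrB; apply: eq_bigr => a _.
    rewrite (bigD1 a) //= [in RHS](bigD1 a) //= eqxx.
    rewrite (eq_bigr (fun b => x a * Xk R k pz a b * x b)); last first.
      by move=> b hb; rewrite eq_sym (negbTE hb) mulr0 subr0.
    rewrite mulr1; ring.
  by rewrite subr_ge0.
Qed.

Definition cc (k : nat) : R := (if odd k then 8 else 16) * 2 ^- k.

Lemma cc_step m : cc m.+1 <= cc m.
Proof.
rewrite /cc /= exprS invfM.
have t0 : 0 < (2 ^+ m)^-1 :> R by rewrite invr_gt0 exprn_gt0.
set t := (2 ^+ m)^-1 in t0 *.
case: (odd m) => /=.
- have -> : 16 * (2^-1 * t) = 8 * t :> R by field.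
  by [].
- have -> : 8 * (2^-1 * t) = 4 * t :> R by field.
  lra.
Qed.

Lemma cc_mono n k : (n <= k)%N -> cc k <= cc n.
Proof.
elim: k => [|k IH]; first by rewrite leqn0 => /eqP ->.
rewrite leq_eqVlt => /orP [/eqP -> //|]; rewrite ltnS => hn.
exact: le_trans (cc_step k) (IH hn).
Qed.

Lemma cc3 : cc 3 = 1.
Proof. by rewrite /cc /=; field. Qed.

Lemma lim_step (a b : nat -> R) (T l q : R) (N : nat) :
  (fun n => \sum_(k < n) a k) @ \oo --> (1 : R) ->
  (fun n => \sum_(k < n) b k) @ \oo --> q ->
  (forall n, (N < n)%N -> l * (\sum_(k < n) a k - T) <= \sum_(k < n) b k) ->
  l * (1 - T) <= q.
Proof.
move=> ha hb H.
have hf : (fun n => l * (\sum_(k < n) a k - T)) @ \oo --> l * (1 - T).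
  apply: cvgMl_tmp; apply: cvgB => //; exact: cvg_cst.
apply: (ler_cvg_to hf hb).
by exists N.+1 => // n /= hn; apply: H.
Qed.

End P5.

Theorem corollary1 (R : realType) (pz : R) (N : nat) (rho : op R) (q : R) :
  0 < pz < 1 -> (1 < N)%N ->
  density rho ->
  (* tr[rho P_DC] = q *)
  (fun n => \sum_(k < n) complex.Re (btr rho (PDC pz) k)) @ \oo --> q ->
  1 - q / lambda_min pz N.+1 <= tr_PiN rho N.
Proof.
move=> hp N1 hd hq.
have [_ _ h1] := hd.
have /andP [p0 p1] := hp.
set D := (2 * pz - 1) ^+ 2 + (if odd N.+1 then 8 else 16) * 2 ^- N.+1 * (pz - pz ^+ 2).
set S := Num.sqrt D.
have hlam : lambda_min pz N.+1 = 1 - (1 + S) / 2.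
  by rewrite /lambda_min -/D -/S; field.
have ccN : cc R N.+1 <= 1 by rewrite -(cc3 R); apply: cc_mono.
have cc0 : 0 < cc R N.+1.
  by rewrite /cc; apply: mulr_gt0; [case: ifP | rewrite invr_gt0 exprn_gt0].
have pq : 0 < pz - pz ^+ 2 by rewrite expr2; nra.
have hDc : D = (2 * pz - 1) ^+ 2 + cc R N.+1 * (pz - pz ^+ 2) by [].
have hX : (2 * pz - 1) ^+ 2 < D.
  by rewrite hDc ltrDl; apply: mulr_gt0.
have hD0 : 0 <= D by apply: le_trans (ltW hX); exact: sqr_ge0.
have hD1 : D < 1.
  rewrite hDc.
  have : cc R N.+1 * (pz - pz ^+ 2) <= pz - pz ^+ 2.
    by rewrite -[X in _ <= X]mul1r; apply: ler_wpM2r => //; exact: ltW.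
  have e : (2 * pz - 1) ^+ 2 = 1 - 4 * (pz - pz ^+ 2) by ring.
  rewrite e; lra.
have hS0 : 0 <= S by exact: sqrtr_ge0.
have hS2 : S ^+ 2 = D by rewrite sqr_sqrtr.
have hS1 : S < 1.
  rewrite -(ltr_pXn2r (n := 2)) ?nnegrE ?expr1n ?hS2 //; exact: ler01.
set lam := 1 - (1 + S) / 2.
have lam0 : 0 < lam by rewrite /lam; lra.
pose a := fun k => complex.Re (btr rho (@idop R) k).
pose b := fun k => complex.Re (btr rho (PDC pz) k).
have hb0 : forall k, 0 <= b k.
  move=> k; have := @block_ge R rho pz 0 k hd.
  rewrite mul0r; apply => w; rewrite mul0r; apply: qf_Xk_ge0.
  by apply/andP; split; apply: ltW.
have hbl : forall k, (N < k)%N -> lam * a k <= b k.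
  move=> k hk; apply: (@block_ge R rho pz lam k hd) => w.
  have k0 : (0 < k)%N by apply: leq_trans hk.
  have k3 : (2 < k)%N by apply: leq_trans hk.
  apply: (@qf_Xk_bound R k k0 pz S w k3 hp hS0).
  - rewrite hS2 hDc -/(cc R k) lerD2l; apply: ler_wpM2r; first exact: ltW.
    exact: cc_mono.
  - by rewrite hS2.
set T := \sum_(k < N.+1) a k.
have hT : tr_PiN rho N = T by rewrite /tr_PiN Re_sum.
have hsum : forall n, (N < n)%N -> lam * (\sum_(k < n) a k - T) <= \sum_(k < n) b k.
  move=> n hn.
  rewrite /T -!(big_mkord xpredT) (big_cat_nat (n := N.+1)) //= addrAC subrr add0r.
  rewrite [X in _ <= X](big_cat_nat (n := N.+1)) //=.
  apply: le_trans (_ : \sum_(N.+1 <= k < n) b k <= _); last first.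
    by rewrite lerDr; apply: sumr_ge0 => k _; exact: hb0.
  rewrite mulr_sumr; apply: ler_sum_nat => k /andP [hk _]; exact: hbl.
have := @lim_step R a b T lam q N h1 hq hsum.
rewrite hT hlam -/lam => h.
have e : lam * (1 - q / lam) = lam - q by field; exact: lt0r_neq0.
rewrite -(ler_pM2l lam0) e; lra.
Qed.
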